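(* Let $a\ge 1$ and $b\ge 0$ be integers, and let $G_{a,b}$ be any cubic graph obtained as follows: take $a$ copies of the $2$-pole $A$ obtained from the Petersen graph by cutting an edge into two dangling edges, and $b$ copies of the $2$-pole $B$ obtained from $K_4$ by cutting an edge into two dangling edges, arrange these $a+b$ $2$-poles in a cyclic order (arbitrary), and for each consecutive pair join one dangling edge of the first to one dangling edge of the next (so each $2$-pole has one dangling edge joined to its predecessor and the other to its successor). Then $$m_3(G_{a,b}) = \frac{4a+2b}{5a+2b}.$$
   Context: For a bridgeless cubic graph $G$, $m_3(G)$ denotes the maximum, over all choices of three perfect matchings $M_1, M_2, M_3$ of $G$, of $|M_1\cup M_2\cup M_3|$, divided by $|E(G)|$. Cutting an edge $uv$ into a pair of dangling edges means deleting $uv$ and attaching one new half-edge (dangling edge) to $u$ and one to $v$; joining two dangling edges means merging them into a single edge between their end vertices. *)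

(* Defs.v *)
From mathcomp Require Import all_boot all_order all_algebra.
Set Implicit Arguments. Unset Strict Implicit. Unset Printing Implicit Defensive.
Import Order.TTheory GRing.Theory Num.Theory.

(* A (simple) graph is given by a finite vertex type V and an edge set
   E : {set {set V}} (each edge a 2-element set of vertices). *)

Definition perfect_matching (V : finType) (E M : {set {set V}}) : bool :=
  (M \subset E) && [forall x : V, #|[set e in M | x \in e]| == 1%N].

Definition m3 (V : finType) (E : {set {set V}}) : rat :=
  ((\max_(t : {set {set V}} * {set {set V}} * {set {set V}} |
          [&& perfect_matching E t.1.1, perfect_matching E t.1.2
            & perfect_matching E t.2])
       #|t.1.1 :|: t.1.2 :|: t.2|)%:R / #|E|%:R)%R.

(* Petersen graph: outer 5-cycle 0..4, spokes i -- i+5,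
   inner pentagram (i+5) -- ((i+2) mod 5)+5. *)
Definition petersen_arc (x y : nat) : bool :=
  [|| (x < 5) && (y < 5) && (y == (x + 1) %% 5),
      (x < 5) && (y == x + 5)
    | [&& 5 <= x, x < 10, 5 <= y & y - 5 == (x - 5 + 2) %% 5]].
Definition petersen_adj (x y : nat) : bool := petersen_arc x y || petersen_arc y x.

Definition k4_adj (x y : nat) : bool := [&& x < 4, y < 4 & x != y].

(* block kind: true = Petersen 2-pole A, false = K4 2-pole B *)
Definition bsize (t : bool) : nat := if t then 10 else 4.
Definition badj (t : bool) : nat -> nat -> bool :=
  if t then petersen_adj else k4_adj.

(* n blocks in cyclic order 0,1,...,n-1 (successor = ordS); block i is a
   copy of the base graph of kind k i, in which the edge (u i)(v i) is cut;
   the dangling edge at u i is joined to the predecessor block, the one at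
   v i to the successor block:  (i, v i) -- (ordS i, u (ordS i)). *)
Section Gab.
Variables (n : nat) (k : 'I_n -> bool).
Variables (u v : forall i : 'I_n, 'I_(bsize (k i))).

Definition gvert := {i : 'I_n & 'I_(bsize (k i))}.

Definition ginternal (p q : gvert) : bool :=
  [&& tag p == tag q,
      badj (k (tag p)) (tagged p) (tagged q)
    & ~~ (((tagged p : nat) == u (tag p)) && ((tagged q : nat) == v (tag p))
          || ((tagged p : nat) == v (tag p)) && ((tagged q : nat) == u (tag p)))].

Definition glink (p q : gvert) : bool :=
  [&& (tagged p : nat) == v (tag p), tag q == ordS (tag p)
    & (tagged q : nat) == u (tag q)].

Definition gadj (p q : gvert) : bool := ginternal p q || glink p q || glink q p.

Definition gedges : {set {set gvert}} :=
  [set e : {set gvert} | [exists p : gvert, exists q : gvert, gadj p q && (e == [set p; q])]].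
End Gab.

(* Main.v *)
Require Import Defs.
From mathcomp Require Import all_boot all_order all_algebra.
From mathcomp Require Import zify.

Definition elist (t : bool) : seq (nat * nat) :=
  if t then [:: (0,1);(1,2);(2,3);(3,4);(4,0);(0,5);(1,6);(2,7);(3,8);(4,9);(5,7);(6,8);(7,9);(8,5);(9,6)]
  else [:: (0,1);(0,2);(0,3);(1,2);(1,3);(2,3)].
Definition ne t := size (elist t).
Definition ends t j := nth (0,0) (elist t) j.
Definition inEd t x j := (x == (ends t j).1) || (x == (ends t j).2).
Definition edge_of t x y := find (fun e : nat * nat => ((e.1 == x) && (e.2 == y)) || ((e.1 == y) && (e.2 == x))) (elist t).
Definition cap (t : bool) := if t then 12 else 6.

Definition pms (t : bool) : seq (seq bool) :=
  if t then [:: [::true;false;true;false;false;false;false;false;false;true;true;true;false;false;false];[::true;false;false;true;false;false;false;true;false;false;false;false;false;true;true];[::false;true;false;true;false;true;false;false;false;false;false;true;true;false;false];[::false;true;false;false;true;false;false;false;true;false;true;false;false;false;true];[::false;false;true;false;true;false;true;false;false;false;false;false;true;true;false];[::false;false;false;false;false;true;true;true;true;true;false;false;false;false;false]]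
  else [:: [::true;false;false;false;false;true];[::false;true;false;false;true;false];[::false;false;true;true;false;false]].

Fixpoint all_bits (m : nat) : seq (seq bool) :=
  if m is m'.+1 then [seq x :: l | x <- [:: true; false], l <- all_bits m'] else [:: [::]].

Definition cntL t (l : seq bool) x := sumn [seq nat_of_bool (nth false l j && inEd t x j) | j <- iota 0 (ne t)].
Definition unL t (l1 l2 l3 : seq bool) :=
  sumn [seq nat_of_bool [|| nth false l1 j, nth false l2 j | nth false l3 j] | j <- iota 0 (ne t)].

Definition tab t J : seq bool * seq bool * seq bool :=
  let P := pms t in
  let Q := [seq l <- P | ~~ nth false l J] in
  (head [::] [seq l <- P | nth false l J], head [::] Q, head [::] (behead Q)).

Lemma F1 t : all (fun x => all (fun y => badj t x y ==> (edge_of t x y < ne t) &&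
   ((ends t (edge_of t x y) == (x,y)) || (ends t (edge_of t x y) == (y,x)))) (iota 0 (bsize t))) (iota 0 (bsize t)).
Proof. by case: t; vm_compute. Qed.

Lemma F2 t : all (fun j => [&& (ends t j).1 < bsize t, (ends t j).2 < bsize t, badj t (ends t j).1 (ends t j).2,
   (ends t j).1 != (ends t j).2, edge_of t (ends t j).1 (ends t j).2 == j & edge_of t (ends t j).2 (ends t j).1 == j]) (iota 0 (ne t)).
Proof. by case: t; vm_compute. Qed.

Lemma F3 t : all (fun x => ~~ badj t x x) (iota 0 (bsize t)).
Proof. by case: t; vm_compute. Qed.

Lemma F4 t : all (fun j => sumn [seq nat_of_bool (inEd t x j) | x <- iota 0 (bsize t)] == 2) (iota 0 (ne t)).
Proof. by case: t; vm_compute. Qed.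

Lemma F5 : all (fun l => all (fun x => cntL true l x == 1) (iota 0 10) ==> (l \in pms true)) (all_bits 15).
Proof. vm_compute. reflexivity. Qed.

Lemma F6 : all (fun l1 => all (fun l2 => all (fun l3 => unL true l1 l2 l3 <= 12) (pms true)) (pms true)) (pms true).
Proof. by vm_compute. Qed.

Lemma F7 t : all (fun J => let: (l1, l2, l3) := tab t J in
  [&& all (fun x => [&& cntL t l1 x == 1, cntL t l2 x == 1 & cntL t l3 x == 1]) (iota 0 (bsize t)),
      nth false l1 J, ~~ nth false l2 J, ~~ nth false l3 J & unL t l1 l2 l3 == cap t]) (iota 0 (ne t)).
Proof. by case: t; vm_compute. Qed.

Set Implicit Arguments. Unset Strict Implicit.

Definition cnt t (b : nat -> bool) x := \sum_(j < ne t) (b j && inEd t x j).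
Definition lc t (J V U : nat) (b : nat -> bool) (c : bool) (x : nat) :=
  \sum_(j < ne t) (b j && ((((j : nat) != J) && inEd t x j) || (((j : nat) == J) && (x == V)))) + ((x == U) && c).

Lemma sum_iota m (f : nat -> nat) : \sum_(j < m) f j = sumn [seq f j | j <- iota 0 m].
Proof. by rewrite sumnE big_map -(big_mkord xpredT) /index_iota subn0. Qed.

Lemma cntE t b x : cnt t b x = cntL t (mkseq b (ne t)) x.
Proof.
rewrite /cnt (sum_iota _ (fun j => nat_of_bool (b j && inEd t x j))) /cntL; congr sumn; apply/eq_in_map => j; rewrite mem_iota /= => hj.
by rewrite nth_mkseq.
Qed.

Lemma unE t (b1 b2 b3 : nat -> bool) :
  \sum_(j < ne t) [|| b1 j, b2 j | b3 j] = unL t (mkseq b1 (ne t)) (mkseq b2 (ne t)) (mkseq b3 (ne t)).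
Proof.
rewrite (sum_iota _ (fun j => nat_of_bool [|| b1 j, b2 j | b3 j])) /unL; congr sumn; apply/eq_in_map => j; rewrite mem_iota /= => hj.
by rewrite !nth_mkseq.
Qed.

Lemma F2P t j : j < ne t -> [&& (ends t j).1 < bsize t, (ends t j).2 < bsize t, badj t (ends t j).1 (ends t j).2,
   (ends t j).1 != (ends t j).2, edge_of t (ends t j).1 (ends t j).2 == j & edge_of t (ends t j).2 (ends t j).1 == j].
Proof. by move=> hj; move/allP: (F2 t) => /(_ j); rewrite mem_iota /= add0n; apply. Qed.

Lemma F1P t x y : x < bsize t -> y < bsize t -> badj t x y -> (edge_of t x y < ne t) &&
   ((ends t (edge_of t x y) == (x,y)) || (ends t (edge_of t x y) == (y,x))).
Proof.
move=> hx hy; move/allP: (F1 t) => /(_ x); rewrite mem_iota /= add0n => /(_ hx).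
by move/allP => /(_ y); rewrite mem_iota /= add0n => /(_ hy) /implyP.
Qed.

Lemma F3P t x : x < bsize t -> ~~ badj t x x.
Proof. by move=> hx; move/allP: (F3 t) => /(_ x); rewrite mem_iota /= add0n; apply. Qed.

Lemma EO2 t j x y : j < ne t -> inEd t x j -> inEd t y j -> x != y -> edge_of t x y = j.
Proof.
move=> hj; case/andP: (F2P hj) => _ /andP [_ /andP [_ /andP [_ /andP [/eqP h1 /eqP h2]]]].
rewrite /inEd; case/orP => /eqP -> ; case/orP => /eqP -> //; by rewrite eqxx.
Qed.

Lemma parity t b : \sum_(x < bsize t) cnt t b x = 2 * \sum_(j < ne t) b j.
Proof.
rewrite /cnt exchange_big /= big_distrr /=; apply: eq_bigr => j _.
rewrite (eq_bigr (fun x : 'I_(bsize t) => b j * inEd t x j)); last by move=> x _; rewrite mulnb.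
rewrite -big_distrr /= mulnC; congr (_ * _).
have := allP (F4 t) j; rewrite mem_iota /= add0n ltn_ord => /(_ isT) /eqP <-.
by rewrite (sum_iota _ (fun x => nat_of_bool (inEd t x j))).
Qed.

Section Rel.
Variables (t : bool) (J U V : nat) (b : nat -> bool) (c : bool).
Hypothesis hJ : J < ne t.
Hypothesis hE : (ends t J == (U, V)) || (ends t J == (V, U)).
Hypothesis hUV : U != V.

Lemma inEdJ x : inEd t x J = (x == U) || (x == V).
Proof. by rewrite /inEd; case/orP: hE => /eqP -> //=; rewrite orbC. Qed.

Lemma rel1 x : x != U -> lc t J V U b c x = cnt t b x.
Proof.
move=> hx; rewrite /lc /cnt (negbTE hx) addn0; apply: eq_bigr => j _.
case: (eqVneq (j : nat) J) => [->|] /=; last by rewrite orbF.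
by rewrite inEdJ (negbTE hx).
Qed.

Lemma rel2 : lc t J V U b c U + b J = cnt t b U + c.
Proof.
rewrite /lc /cnt eqxx /=.
have -> : \sum_(j < ne t) (b j && inEd t U j) = b J + \sum_(j < ne t | j != Ordinal hJ) (b j && inEd t U j).
  by rewrite (bigD1 (Ordinal hJ)) //= inEdJ eqxx andbT.
rewrite (bigD1 (Ordinal hJ)) //= eqxx /= (negbTE hUV) andbF add0n.
set S := \sum_(j < ne t | j != Ordinal hJ) (b j && inEd t U j).
suff -> : \sum_(i < ne t | i != Ordinal hJ) (b i && (((i : nat) != J) && inEd t U i || ((i : nat) == J) && false)) = S by lia.
apply: eq_bigr => j hj; have -> : (j : nat) != J by move: hj; apply: contra => /eqP h; apply/eqP/val_inj.
by rewrite /= andbF orbF.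
Qed.

Lemma rel_eq : c = b J -> forall x, lc t J V U b c x = cnt t b x.
Proof.
move=> hc x; case: (eqVneq x U) => [->|hx]; last exact: rel1.
by apply/eqP; rewrite -(eqn_add2r (b J)) rel2 hc.
Qed.

Lemma local_ub : U < bsize t -> (forall x, x < bsize t -> lc t J V U b c x = 1) ->
  forall x, x < bsize t -> cnt t b x = 1.
Proof.
move=> hU hl x hx; case: (eqVneq x U) => [->|hxU]; last by rewrite -rel1 // hl.
have hp := parity t b.
rewrite (bigD1 (Ordinal hU)) //= in hp.
rewrite (eq_bigr (fun _ => 1)) in hp; last first.
  move=> y hy; rewrite -rel1 ?hl //; move: hy; apply: contra => /eqP h; apply/eqP/val_inj.
rewrite sum1_card cardC1 card_ord in hp.
have h2 := rel2; rewrite hl // in h2.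
have hbs : bsize t = 10 \/ bsize t = 4 by rewrite /bsize; case: (t); [left|right].
move: hp h2; case: (b J); case: c => /=; lia.
Qed.
End Rel.

Lemma all_bitsP (l : seq bool) : l \in all_bits (size l).
Proof.
elim: l => [|x l IH] //=; rewrite mem_cat; case: x; apply/orP; [left|right];
  rewrite ?cats0 mem_map //; by move=> ? ? [].
Qed.

Lemma cntE' t l x : cnt t (nth false l) x = cntL t l x.
Proof. by rewrite /cnt (sum_iota _ (fun j => nat_of_bool (nth false l j && inEd t x j))). Qed.

Lemma unE' t l1 l2 l3 :
  \sum_(j < ne t) [|| nth false l1 j, nth false l2 j | nth false l3 j] = unL t l1 l2 l3.
Proof. by rewrite (sum_iota _ (fun j => nat_of_bool [|| nth false l1 j, nth false l2 j | nth false l3 j])). Qed.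

Lemma ub_local t (b1 b2 b3 : nat -> bool) :
  (forall x, x < bsize t -> [/\ cnt t b1 x = 1, cnt t b2 x = 1 & cnt t b3 x = 1]) ->
  \sum_(j < ne t) [|| b1 j, b2 j | b3 j] <= cap t.
Proof.
case: t => h; last first.
  apply: (@leq_trans (\sum_(j < ne false) 1)); first by apply: leq_sum => j _; case: (_ || _).
  by rewrite sum1_card card_ord.
have pm (b : nat -> bool) : (forall x, x < 10 -> cnt true b x = 1) -> mkseq b 15 \in pms true.
  move=> hb; move/allP: F5 => /(_ (mkseq b 15)).
  have := all_bitsP (mkseq b 15); rewrite size_mkseq => hin /(_ hin) /implyP; apply.
  apply/allP => x; rewrite mem_iota add0n => /andP [_ hx].
  by rewrite -[15]/(ne true) -cntE hb.
have p1 := pm b1 (fun x hx => let: And3 a _ _ := h x hx in a).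
have p2 := pm b2 (fun x hx => let: And3 _ a _ := h x hx in a).
have p3 := pm b3 (fun x hx => let: And3 _ _ a := h x hx in a).
rewrite unE.
by move/allP: F6 => /(_ _ p1) /allP /(_ _ p2) /allP /(_ _ p3).
Qed.

Definition tb (r : nat) t J : nat -> bool :=
  let: (l1, l2, l3) := tab t J in nth false (if r == 0 then l1 else if r == 1 then l2 else l3).

Lemma tab_ok t J : J < ne t ->
  [/\ forall r x, x < bsize t -> cnt t (tb r t J) x = 1,
      tb 0 t J J = true, tb 1 t J J = false, tb 2 t J J = false &
      \sum_(j < ne t) [|| tb 0 t J j, tb 1 t J j | tb 2 t J j] = cap t].
Proof.
move=> hJ; move/allP: (F7 t) => /(_ J); rewrite mem_iota add0n hJ => /(_ isT).
rewrite /tb; case: (tab t J) => [[l1 l2] l3] /and5P [/allP ha h1 h2 h3 /eqP hu]; split.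
- move=> r x hx; rewrite cntE'; have hx' : x \in iota 0 (bsize t) by rewrite mem_iota add0n hx.
  have /and3P [/eqP e1 /eqP e2 /eqP e3] := ha x hx'.
  by case: (r == 0) => //; case: (r == 1).
- by [].
- by apply/negbTE.
- by apply/negbTE.
- by rewrite unE'.
Qed.

Lemma ne_le t : ne t <= 15. Proof. by case: t. Qed.

Section G.
Variables (n : nat) (k : 'I_n -> bool) (u v : forall i : 'I_n, 'I_(bsize (k i))).
Hypothesis huv : forall i, badj (k i) (u i) (v i).

Local Notation gv := (gvert k).
Definition mkv (i : 'I_n) (y : nat) : gv := Tagged (fun i => 'I_(bsize (k i))) (insubd (u i) y).

Lemma gv_eq (p q : gv) : (p == q) = (tag p == tag q) && ((tagged p : nat) == tagged q).
Proof.
apply/eqP/andP => [-> //|[/eqP e1 /eqP e2]].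
case: p q e1 e2 => [i x] [i' y] /= e1; subst i' => /ord_inj -> //.
Qed.

Lemma mkv_val i y : y < bsize (k i) -> (tagged (mkv i y) : nat) = y.
Proof. by move=> h; rewrite /= val_insubd h. Qed.

Lemma mkv_eq p i y : y < bsize (k i) -> (p == mkv i y) = (tag p == i) && ((tagged p : nat) == y).
Proof. by move=> h; rewrite gv_eq mkv_val. Qed.

Lemma mkv_T i (x : 'I_(bsize (k i))) : mkv i x = Tagged (fun i => 'I_(bsize (k i))) x.
Proof. by apply/eqP; rewrite gv_eq /= val_insubd ltn_ord !eqxx. Qed.

Definition J i := edge_of (k i) (u i) (v i).

Lemma J_ok i : (J i < ne (k i)) && ((ends (k i) (J i) == (u i : nat, v i : nat)) || (ends (k i) (J i) == (v i : nat, u i : nat))).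
Proof. exact: (F1P (ltn_ord (u i)) (ltn_ord (v i)) (huv i)). Qed.

Lemma J_lt i : J i < ne (k i). Proof. by case/andP: (J_ok i). Qed.

Lemma J_E i : (ends (k i) (J i) == (u i : nat, v i : nat)) || (ends (k i) (J i) == (v i : nat, u i : nat)).
Proof. by case/andP: (J_ok i). Qed.

Lemma uv_neq i : (u i : nat) != v i.
Proof. apply/eqP => e; move: (huv i); rewrite -e; apply/negP/F3P/ltn_ord. Qed.

Definition gE0 (i : 'I_n) (j : nat) : {set gv} :=
  if j == J i then [set mkv i (v i); mkv (ordS i) (u (ordS i))]
  else [set mkv i (ends (k i) j).1; mkv i (ends (k i) j).2].
Definition gE (s : 'I_n * 'I_15) := gE0 s.1 s.2.
Definition L := [set s : 'I_n * 'I_15 | s.2 < ne (k s.1)].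

Lemma mem_int p i j : j < ne (k i) ->
  (p \in [set mkv i (ends (k i) j).1; mkv i (ends (k i) j).2]) = (tag p == i) && inEd (k i) (tagged p) j.
Proof.
move=> hj; case/andP: (F2P hj) => h1 /andP [h2 _].
by rewrite in_set2 !mkv_eq // -andb_orr.
Qed.

Lemma mem_link p i :
  (p \in [set mkv i (v i); mkv (ordS i) (u (ordS i))]) =
  ((tag p == i) && ((tagged p : nat) == v i)) || ((tag p == ordS i) && ((tagged p : nat) == u (ordS i))).
Proof. by rewrite in_set2 !mkv_eq ?ltn_ord. Qed.

Lemma gE_in s : s \in L -> gE s \in gedges u v.
Proof.
case: s => i j; rewrite inE /= => hj; rewrite /gE /gE0 /= inE.
case: ifP => hJ.
- apply/existsP; exists (mkv i (v i)); apply/existsP; exists (mkv (ordS i) (u (ordS i))).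
  rewrite eqxx andbT /gadj /glink /= !mkv_val ?ltn_ord // !eqxx.
  by rewrite orbT.
- case/andP: (F2P hj) => h1 /andP [h2 /andP [hb /andP [hne /andP [/eqP e1 /eqP e2]]]].
  apply/existsP; exists (mkv i (ends (k i) j).1); apply/existsP; exists (mkv i (ends (k i) j).2).
  rewrite eqxx andbT /gadj /ginternal /= !mkv_val // eqxx hb /=.
  apply/orP; left; apply/orP; left; apply/negP; case/orP => /andP [/eqP a /eqP b];
  by move: hJ; rewrite /J -a -b ?e1 ?e2 eqxx.
Qed.

Lemma gE_surj e : e \in gedges u v -> exists2 s, s \in L & e = gE s.
Proof.
rewrite inE => /existsP [p /existsP [q /andP [hpq /eqP ->]]].
case: p q hpq => [i x] [i' y].
case/orP => [/orP [hint|hl]|hl].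
- case/and3P: hint => /= /eqP ei; subst i' => hb hcut.
  have /andP [hj hE] := F1P (ltn_ord x) (ltn_ord y) hb.
  have hj15 : edge_of (k i) x y < 15 by apply: leq_trans hj (ne_le _).
  exists (i, inord (edge_of (k i) x y)); first by rewrite inE /= inordK.
  rewrite /gE /gE0 /= inordK //.
  have -> : (edge_of (k i) x y == J i) = false.
    apply/negbTE; apply: contra hcut => /eqP hJ; case/andP: (J_ok i) => _; rewrite -hJ.
    by case/orP: hE => /eqP ->; case/orP => /eqP [-> ->]; rewrite !eqxx ?orbT.
  by case/orP: hE => /eqP -> /=; rewrite !mkv_T // setUC.
- case/and3P: hl => /= hv /eqP ei hu; subst i'.
  exists (i, inord (J i)); first by rewrite inE /= inordK ?J_lt // (leq_trans (J_lt i) (ne_le _)).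
  rewrite /gE /gE0 /= inordK ?eqxx; last by rewrite (leq_trans (J_lt i) (ne_le _)).
  by congr [set _; _]; apply/eqP; rewrite mkv_eq ?ltn_ord //= eqxx ?hv ?hu.
- case/and3P: hl => /= hv /eqP ei hu; subst i.
  exists (i', inord (J i')); first by rewrite inE /= inordK ?J_lt // (leq_trans (J_lt i') (ne_le _)).
  rewrite /gE /gE0 /= inordK ?eqxx; last by rewrite (leq_trans (J_lt i') (ne_le _)).
  by rewrite setUC; congr [set _; _]; apply/eqP; rewrite mkv_eq ?ltn_ord //= eqxx ?hv ?hu.
Qed.

Lemma link_ne_int i1 i2 j2 : j2 < ne (k i2) -> (j2 == J i2) = false ->
  [set mkv i1 (v i1); mkv (ordS i1) (u (ordS i1))] <> [set mkv i2 (ends (k i2) j2).1; mkv i2 (ends (k i2) j2).2].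
Proof.
move=> h2 hJ2 e.
have := set21 (mkv i1 (v i1)) (mkv (ordS i1) (u (ordS i1))); rewrite e mem_int // mkv_val ?ltn_ord //=.
case/andP => /eqP ei hv; subst i2.
have := set22 (mkv i1 (v i1)) (mkv (ordS i1) (u (ordS i1))); rewrite e mem_int // mkv_val ?ltn_ord //=.
case/andP => /eqP es hu; rewrite es in hu.
have := EO2 h2 hu hv (uv_neq i1); rewrite -/(J i1) => hJ.
by rewrite hJ eqxx in hJ2.
Qed.

Lemma gE_inj : {in L &, injective gE}.
Proof.
move=> [i1 j1] [i2 j2]; rewrite !inE /= => h1 h2; rewrite /gE /gE0 /=.
case: ifP => hJ1; case: ifP => hJ2 e.
- have := set21 (mkv i1 (v i1)) (mkv (ordS i1) (u (ordS i1))); rewrite e mem_link mkv_val ?ltn_ord //=.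
  case/orP => /andP [/eqP ei hv].
  + subst i2; congr pair; apply: ord_inj; by rewrite (eqP hJ1) (eqP hJ2).
  + subst i1; by rewrite eq_sym (negbTE (uv_neq _)) in hv.
- by case: (link_ne_int h2 hJ2 e).
- by case: (link_ne_int h1 hJ1 (esym e)).
- case/andP: (F2P h1) => a1 /andP [b1 /andP [_ /andP [hne /andP [/eqP e1 _]]]].
  have := set21 (mkv i1 (ends (k i1) j1).1) (mkv i1 (ends (k i1) j1).2); rewrite e mem_int // mkv_val //=.
  case/andP => /eqP ei ha; subst i2.
  have := set22 (mkv i1 (ends (k i1) j1).1) (mkv i1 (ends (k i1) j1).2); rewrite e mem_int // mkv_val //=.
  case/andP => _ hb.
  have := EO2 h2 ha hb hne; rewrite e1 => ej.
  by congr pair; apply: ord_inj.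
Qed.

Lemma sum_ord_eq1 m (J0 : nat) (C : bool) : J0 < m -> \sum_(j < m) (((j : nat) == J0) && C) = C.
Proof.
move=> hJ; rewrite (bigD1 (Ordinal hJ)) //= eqxx big1 ?addn0 // => j hj.
have -> : ((j : nat) == J0) = false by apply/negbTE; move: hj; apply: contra => /eqP h; apply/eqP/val_inj.
by [].
Qed.

Lemma sum_widen t (F : nat -> bool) : \sum_(j < 15) ((j < ne t) && F j) = \sum_(j < ne t) F j.
Proof.
rewrite (big_ord_widen 15 (fun j => nat_of_bool (F j)) (ne_le t)) [RHS]big_mkcond /=.
by apply: eq_bigr => j _; case: (j < ne t).
Qed.

Lemma mem_gE0 (p : gv) i' j : j < ne (k i') -> (p \in gE0 i' j) =
  if j == J i' then ((tag p == i') && ((tagged p : nat) == v i')) || ((tag p == ordS i') && ((tagged p : nat) == u (ordS i')))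
  else (tag p == i') && inEd (k i') (tagged p) j.
Proof. by move=> hj; rewrite /gE0; case: ifP => _; [exact: mem_link | exact: mem_int]. Qed.

Lemma sum_delta (I : finType) (i : I) (X : nat) : \sum_(i0 : I) (i0 == i) * X = X.
Proof.
rewrite (bigD1 i) //= eqxx mul1n big1 ?addn0 // => i0 hi.
by rewrite (negbTE hi).
Qed.

Lemma sum_deltaS (i : 'I_n) (F : 'I_n -> nat) : \sum_(i0 < n) (ordS i0 == i) * F i0 = F (ord_pred i).
Proof.
rewrite (bigD1 (ord_pred i)) //= ord_predK eqxx mul1n big1 ?addn0 // => i0 hi0.
have -> : (ordS i0 == i) = false by apply/negbTE; apply: contra hi0 => /eqP <-; rewrite ordSK.
by [].
Qed.

Lemma count_vertex (M : {set {set gv}}) : M \subset gedges u v -> forall (i : 'I_n) (x : 'I_(bsize (k i))),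
  #|[set e in M | Tagged (fun i => 'I_(bsize (k i))) x \in e]| =
  lc (k i) (J i) (v i) (u i) (fun j => gE0 i j \in M) (gE0 (ord_pred i) (J (ord_pred i)) \in M) x.
Proof.
move=> hM i x; set p : gv := Tagged (fun i0 : 'I_n => 'I_(bsize (k i0))) x.
have -> : [set e in M | p \in e] = gE @: [set s in L | (gE s \in M) && (p \in gE s)].
  apply/setP => e; rewrite inE; apply/andP/imsetP => [[he hp]|[s]].
  - have [s hs es] := gE_surj (subsetP hM e he); subst e.
    by exists s => //; rewrite inE hs he hp.
  - by rewrite !inE => /andP [hs /andP [hm hp]] ->; split.
rewrite card_in_imset; last first.
  move=> s1 s2; rewrite inE => /andP [h1 _]; rewrite inE => /andP [h2 _]; exact: gE_inj.
have -> : #|[set s in L | (gE s \in M) && (p \in gE s)]| =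
    \sum_(i' < n) \sum_(j < 15) ((j < ne (k i')) && (gE0 i' j \in M) && (p \in gE0 i' j)).
  rewrite pair_bigA /= -sum1_card big_mkcond /=; apply: eq_bigr => s _.
  by rewrite !inE /gE andbA; case: (_ && _).
pose A (j : nat) := (j < ne (k i)) && ((gE0 i j \in M) && ((((j : nat) != J i) && inEd (k i) x j) || (((j : nat) == J i) && ((x : nat) == v i)))).
pose B (i' : 'I_n) (j : nat) := ((j : nat) == J i') && (((x : nat) == u i) && (gE0 i' j \in M)).
rewrite (eq_bigr (fun i' => \sum_(j < 15) ((i' == i) * A j + (ordS i' == i) * B i' j))); last first.
  move=> i' _; apply: eq_bigr => j _; rewrite /A /B.
  case hj: (j < ne (k i')); last first.
    have -> : ((j:nat) == J i') = false by apply/negbTE; apply: contraFN hj => /eqP ->; exact: J_lt.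
    by case: (i' =P i) => [ei|_]; [subst i'; rewrite hj|]; rewrite /= ?muln0.
  rewrite mem_gE0 //=.
  case: (eqVneq i' i) => [ei|hne].
    subst i'; rewrite hj mul1n /=.
    case: ifP => hJ /=; last by rewrite orbF muln0 addn0.
    have huv' := uv_neq i.
    case: (eqVneq (ordS i) i) => [es|es]; last first.
      by rewrite /= ?muln0 ?addn0 ?orbF.
    rewrite es mul1n /=.
    case: (gE0 i j \in M); rewrite /= ?andbF //.
    case: (x =P v i :> nat) => hv; case: (x =P u i :> nat) => hu //=.
    by rewrite -hu hv eqxx in huv'.
  rewrite /= mul0n add0n.
  case: ifP => hJ /=; last by rewrite andbF muln0.
  case: (eqVneq (ordS i') i) => [es|es]; last by rewrite /= ?andbF ?muln0.
  by rewrite es /= mul1n andbC.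
rewrite (eq_bigr (fun i0 => (i0 == i) * \sum_(j < 15) A j + (ordS i0 == i) * \sum_(j < 15) B i0 j)); last first.
  by move=> i0 _; rewrite big_split /= -!big_distrr.
rewrite big_split /=.
rewrite sum_delta sum_deltaS.
have hJ15 : J (ord_pred i) < 15 by apply: leq_trans (J_lt _) (ne_le _).
have -> : \sum_(j < 15) B (ord_pred i) j = ((x : nat) == u i) && (gE0 (ord_pred i) (J (ord_pred i)) \in M).
  rewrite -(sum_ord_eq1 _ hJ15); apply: eq_bigr => j _.
  by rewrite /B; case: eqP => // ->.
rewrite /A /lc.
by rewrite (sum_widen (k i) (fun j => (gE0 i j \in M) && ((((j : nat) != J i) && inEd (k i) x j) || (((j : nat) == J i) && ((x : nat) == v i))))).
Qed.

Lemma card_Lsub (F : 'I_n -> nat -> bool) :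
  #|[set s in L | F s.1 s.2]| = \sum_(i < n) \sum_(j < ne (k i)) F i j.
Proof.
transitivity (\sum_(s : 'I_n * 'I_15) nat_of_bool ((s.2 < ne (k s.1)) && F s.1 s.2)).
  rewrite -sum1_card big_mkcond /=; apply: eq_bigr => s _; rewrite !inE; by case: (_ && _).
rewrite -(pair_bigA _ (fun i (j : 'I_15) => nat_of_bool ((j < ne (k i)) && F i j))) /=.
apply: eq_bigr => i _; exact: sum_widen.
Qed.

Lemma card_E : #|gedges u v| = \sum_(i < n) ne (k i).
Proof.
have -> : gedges u v = gE @: L.
  apply/setP => e; apply/idP/imsetP => [he|[s hs ->]]; last exact: gE_in.
  by have [s hs ->] := gE_surj he; exists s.
rewrite card_in_imset; last exact: gE_inj.
have -> : L = [set s in L | true] by apply/setP => s; rewrite !inE andbT.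
rewrite (card_Lsub (fun _ _ => true)); apply: eq_bigr => i _.
by rewrite sum1_card card_ord.
Qed.

Lemma injL (P : pred ('I_n * 'I_15)) : {in [set s in L | P s] &, injective gE}.
Proof. move=> s1 s2; rewrite inE => /andP [h1 _]; rewrite inE => /andP [h2 _]; exact: gE_inj. Qed.

Lemma img_sub (P : pred ('I_n * 'I_15)) s : s \in L -> (gE s \in gE @: [set s' in L | P s']) = P s.
Proof.
move=> hs; apply/imsetP/idP => [[s']|hp]; last by exists s => //; rewrite inE hs hp.
by rewrite inE => /andP [hs' hp] e; rewrite (gE_inj hs hs' e).
Qed.

Lemma lc_ext t J0 V U b b' c c' x : (forall j, j < ne t -> b j = b' j) -> c = c' ->
  lc t J0 V U b c x = lc t J0 V U b' c' x.
Proof. by move=> hb ->; rewrite /lc; congr (_ + _); apply: eq_bigr => j _; rewrite hb. Qed.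

Lemma ub (M1 M2 M3 : {set {set gv}}) : perfect_matching (gedges u v) M1 ->
  perfect_matching (gedges u v) M2 -> perfect_matching (gedges u v) M3 ->
  #|M1 :|: M2 :|: M3| <= \sum_(i < n) cap (k i).
Proof.
move=> /andP [s1 /forallP p1] /andP [s2 /forallP p2] /andP [s3 /forallP p3].
have -> : M1 :|: M2 :|: M3 = gE @: [set s in L | [|| gE s \in M1, gE s \in M2 | gE s \in M3]].
  apply/setP => e; apply/idP/imsetP => [he | [s]].
  - have heE : e \in gedges u v.
      move: he; rewrite !in_setU => /orP [/orP [h|h]|h];
        [exact: (subsetP s1) | exact: (subsetP s2) | exact: (subsetP s3)].
    have [s hs es] := gE_surj heE; subst e; exists s => //; rewrite inE hs /=; move: he; by rewrite !in_setU orbA.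
  - by rewrite inE => /andP [_ h] ->; rewrite !in_setU -orbA.
rewrite card_in_imset; last exact: injL.
have -> : #|[set s in L | [|| gE s \in M1, gE s \in M2 | gE s \in M3]]| =
  \sum_(i < n) \sum_(j < ne (k i)) [|| gE0 i j \in M1, gE0 i j \in M2 | gE0 i j \in M3]
  by exact: (card_Lsub (fun i j => [|| gE0 i j \in M1, gE0 i j \in M2 | gE0 i j \in M3])).
apply: leq_sum => i _.
have key (M : {set {set gv}}) : M \subset gedges u v -> (forall p, #|[set e in M | p \in e]| == 1) ->
    forall x, x < bsize (k i) -> cnt (k i) (fun j => gE0 i j \in M) x = 1.
  move=> sM pM; apply: (local_ub (J_lt i) (J_E i) (uv_neq i) (ltn_ord (u i))).
  move=> y hy; have := pM (Tagged (fun i0 : 'I_n => 'I_(bsize (k i0))) (Ordinal hy)).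
  by rewrite (count_vertex sM) => /eqP; apply.
by apply: (@ub_local (k i) (fun j => gE0 i j \in M1) (fun j => gE0 i j \in M2) (fun j => gE0 i j \in M3)) => x hx; split; apply: key.
Qed.

Definition Mr (r : nat) : {set {set gv}} := gE @: [set s in L | tb r (k s.1) (J s.1) s.2].

Lemma Mr_mem r i j : j < ne (k i) -> (gE0 i j \in Mr r) = tb r (k i) (J i) j.
Proof.
move=> hj; have h15 : j < 15 := leq_trans hj (ne_le _).
have -> : gE0 i j = gE (i, inord j) by rewrite /gE /= inordK.
rewrite img_sub /= ?inordK // inE /= inordK //.
Qed.

Lemma tbJ t J0 r : J0 < ne t -> r < 3 -> tb r t J0 J0 = (r == 0).
Proof. by move=> h; case: (tab_ok h) => _ h0 h1 h2 _; case: r => [|[|[|]]]. Qed.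

Lemma Mr_sub r : Mr r \subset gedges u v.
Proof. by apply/subsetP => e /imsetP [s]; rewrite inE => /andP [hs _] ->; exact: gE_in. Qed.

Lemma Mr_pm r : r < 3 -> perfect_matching (gedges u v) (Mr r).
Proof.
move=> hr; apply/andP; split; first exact: Mr_sub.
apply/forallP => p; case: p => i x.
rewrite (count_vertex (Mr_sub r) x).
rewrite (@lc_ext _ _ _ _ _ (tb r (k i) (J i)) _ (tb r (k i) (J i) (J i))); first last.
- by rewrite Mr_mem ?J_lt // !tbJ ?J_lt.
- by move=> j hj; rewrite Mr_mem.
rewrite (rel_eq (J_lt i) (J_E i) (uv_neq i) erefl).
by case: (tab_ok (J_lt i)) => h _ _ _ _; rewrite h.
Qed.

Lemma Mr_union : #|Mr 0 :|: Mr 1 :|: Mr 2| = \sum_(i < n) cap (k i).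
Proof.
rewrite /Mr -!imsetU.
have -> : [set s in L | tb 0 (k s.1) (J s.1) s.2] :|: [set s in L | tb 1 (k s.1) (J s.1) s.2]
   :|: [set s in L | tb 2 (k s.1) (J s.1) s.2] =
   [set s in L | [|| tb 0 (k s.1) (J s.1) s.2, tb 1 (k s.1) (J s.1) s.2 | tb 2 (k s.1) (J s.1) s.2]].
  by apply/setP => s; rewrite !inE; case: (_ < _) => //=; rewrite orbA.
rewrite card_in_imset; last exact: injL.
have -> : #|[set s in L | [|| tb 0 (k s.1) (J s.1) s.2, tb 1 (k s.1) (J s.1) s.2 | tb 2 (k s.1) (J s.1) s.2]]| =
  \sum_(i < n) \sum_(j < ne (k i)) [|| tb 0 (k i) (J i) j, tb 1 (k i) (J i) j | tb 2 (k i) (J i) j]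
  by exact: (card_Lsub (fun i j => [|| tb 0 (k i) (J i) j, tb 1 (k i) (J i) j | tb 2 (k i) (J i) j])).
by apply: eq_bigr => i _; case: (tab_ok (J_lt i)).
Qed.

Lemma m3_val : m3 (gedges u v) = ((\sum_(i < n) cap (k i))%:R / (\sum_(i < n) ne (k i))%:R)%R.
Proof.
rewrite /m3 card_E; congr (_%:R / _)%R; apply/eqP; rewrite eqn_leq; apply/andP; split.
- by apply/bigmax_leqP => t /and3P [h1 h2 h3]; exact: ub.
- rewrite -Mr_union; apply: (leq_bigmax_cond ((Mr 0, Mr 1), Mr 2)).
  by rewrite /= !Mr_pm.
Qed.
End G.

Unset Implicit Arguments.
Import GRing.Theory.

Theorem lemma3 (a b : nat) (ha : (1 <= a)%N) (k : 'I_(a + b) -> bool)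
  (hk : #|[set i | k i]| = a)
  (u v : forall i : 'I_(a + b), 'I_(bsize (k i)))
  (huv : forall i, badj (k i) (u i) (v i)) :
  m3 (gedges u v) = ((4 * a + 2 * b)%:R / (5 * a + 2 * b)%:R)%R.
Proof.
rewrite m3_val //.
have sk (f : bool -> nat) : \sum_(i < a + b) f (k i) = f true * a + f false * b.
  have e1 : \sum_(i < a + b) (k i : nat) = a.
    rewrite -[X in _ = X]hk -sum1_card [RHS]big_mkcond /=; apply: eq_bigr => i _; rewrite inE; by case: (k i).
  have e2 : \sum_(i < a + b) (k i : nat) + \sum_(i < a + b) (~~ k i : nat) = a + b.
    rewrite -big_split /= (eq_bigr (fun _ => 1)) ?sum1_card ?card_ord // => i _; by case: (k i).
  rewrite (eq_bigr (fun i => f true * k i + f false * ~~ k i)); last first.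
    by move=> i _; case: (k i); rewrite /= ?muln0 ?muln1 ?addn0.
  rewrite big_split /= -!big_distrr /= e1.
  have -> : \sum_(i < a + b) (~~ k i : nat) = b by lia.
  by [].
rewrite (sk cap) (sk ne) /=.
have -> : 12 * a + 6 * b = 3 * (4 * a + 2 * b) by lia.
have -> : 15 * a + 6 * b = 3 * (5 * a + 2 * b) by lia.
rewrite !natrM -mulf_div divff ?mul1r // pnatr_eq0.
Qed.
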